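(* Consider REShare with parameter $\varepsilon^*>0$ run on a request sequence in which every request has infinite duration, so that the execution is divided into consecutive intervals $h=1,2,\ldots$, interval $h$ using parameter $\varepsilon_h=\varepsilon^*/2^{h-1}$ and handling the subsequence $\sigma_h$ of requests arriving in it. Then for every $k=1,2,\ldots$, $$\sum_{h=1}^k\phi(\mathrm{REShare},\sigma_h)\le(2+4\varepsilon_k)\sum_{h=1}^k\tilde\phi(\mathrm{SHA}(\varepsilon_h),\sigma_h).$$
   Context: Network: a layered graph of finitely many nodes (datacenters), $n$ in total; a node is at layer $\ell\ge0$ if its distance from the closest leaf is $\ell$. Every node can host arbitrarily many virtual machines (VMs). Each VM $b$ runs exactly one VNF $v$ from a finite set $\mathcal V$, has maximum computing capability $\bar\mu>0$ and allocated capability $\mu_b\le\bar\mu$. VNF $v$ has complexity $\theta_v\in(0,1]$. Requests: requests $r$ arrive online with a set $\mathcal V_r\subseteq\mathcal V$ of VNFs, duration $\tau_r$, load $\lambda_r\ge\lambda_{\min}=\inf_r\lambda_r>0$ ($\lambda_{\min}$ known), delay target $D_r$. For $v\in\mathcal V_r$, $(r,v)$ is a job. For a VM $b$ running $v$, $\Lambda(b)$ is the total load of its jobs; each job on $b$ experiences processing latency $1/(\mu_b-\theta_v\Lambda(b))$. Forwarding latency to layer $\ell$ is $d_\ell$, strictly increasing. The latency of $r$ is the maximum $d_\ell$ over layers hosting its jobs plus the sum of processing latencies. Fair delay allocation: $M_{r,v}=1/(\bar\mu-\theta_v\lambda_r)$; $\ell^*(r)$ is the highest layer $\ell$ with $d_\ell+\sum_{v}M_{r,v}\le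 D_r$; $D_r^v=\frac{M_{r,v}}{\sum_{u\in\mathcal V_r}M_{r,u}}(D_r-d_{\ell^*(r)})$. Feasible deployment of $r$: each job on a VM $b$ running $v$ with $\mu_b\le\bar\mu$ and $1/(\mu_b-\theta_v\Lambda(b))\le D_r^v$, and latency of $r$ at most $D_r$. Cost: a VM at a node of layer $\ell$ hosting at least one job costs $\kappa_f^\ell+\kappa_p^\ell\mu_b$, with $\kappa_f^\ell,\kappa_p^\ell$ strictly decreasing in $\ell$; $\kappa^\ell=\kappa_f^\ell+\kappa_p^\ell\bar\mu$. Latency ranges for $\varepsilon>0$: $L_0=[\frac{1}{\bar\mu-\lambda_{\min}},\frac{1}{\bar\mu-\lambda_{\min}(1+\varepsilon)}]$, $L_j=(\frac{1}{\bar\mu-\lambda_{\min}(1+\varepsilon)^j},\frac{1}{\bar\mu-\lambda_{\min}(1+\varepsilon)^{j+1}}]$, $j\ge1$; job $(r,v)$ is associated with $L_j$ if $D_r^v\in L_j$. c-REShare$(\varepsilon)$: on arrival of $r$, choose a node $i^*$ at layer $\ell^*(r)$; for each $v\in\mathcal V_r$ with $D_r^v\in L_j$, a VM in $i^*$ running $v$ and hosting jobs of $L_j$ is viable if running it at speed $\bar\mu$ with the added load $\lambda_r$ gives latency $\frac{1}{\bar\mu-\theta_v(\Lambda(b)+\lambda_r)}$ at most the fair delay allocation of $(r,v)$ and of every job already on it; place $(r,v)$ on the viable VM with largest $\Lambda(b)$ (capability set to $\theta_v\Lambda(b)+1/\min_{(r',v)\in b}D^v_{r'}$, including the new job), or on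 a new VM with capability $\theta_v\lambda_r+1/D_r^v$ if none is viable. SHA$(\varepsilon)$: each job associated with $L_j$ is replaced by a top job with the same load and delay constraint $D_j=\frac{1}{\bar\mu-\lambda_{\min}(1+\varepsilon)^{j+1}}$; SHA$(\varepsilon)$ is the minimum-cost placement of top jobs in which each job of $r$ is in a single node at a layer where deploying $r$ is feasible, a job's load may be split fractionally among VMs running $v$ in that node, jobs of different ranges never share a VM, and each top job meets its relaxed constraint. $\tilde\phi(\mathrm{SHA}(\varepsilon),\sigma)$ denotes the total cost of only the full VMs (running at capability $\bar\mu$) used by SHA$(\varepsilon)$ on input $\sigma$. REShare (parameter $\varepsilon^*>0$; $\log$ is natural logarithm): let $Z=[(2n+2)(1+\varepsilon^* )+1]\log(\bar\mu/\lambda_{\min})\,|\mathcal V|\sum_i\kappa^{\ell(i)}$, sum over all nodes $i$, $\ell(i)$ the layer of $i$. Initialize $q=1$, $h(1)=1$, $\varepsilon_1=\varepsilon^*$, $T_1=0$. For each arrival/departure of a request $r$: handle $r$ with c-REShare$(\varepsilon_{h(q)})$, using the latency ranges of $\varepsilon_{h(q)}$ (so jobs handled in different intervals never share VMs), and update a simulated SHA$(\varepsilon_{h(q)})$ run on the subsequence $\sigma_q$ of requests handled in the current interval $q$; let $Y_q^r=\tilde\phi(\mathrm{SHA}(\varepsilon_{h(q)}),\sigma_q^r)$ where $\sigma_q^r$ is $\sigma_q$ up to and including $r$. With $C_q=\frac{Z}{\varepsilon_{h(q)}\log(1+\varepsilon_{h(q)})}$ and $S_q=\frac{1}{\varepsilon_{h(q)}}\sum_{p=1}^{h(q)-1}(2+3\varepsilon_{p})\tilde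 Y_p$: if $Y_q^r\ge\max\{C_q,S_q\}$, set $\varepsilon_{h(q)+1}=\varepsilon_{h(q)}/2$, $T_{h(q)+1}=\Lambda$ (the current total system load), $\tilde Y_{h(q)}=Y_q^r$, $h(q+1)=h(q)+1$, $q\gets q+1$; else if $\Lambda<T_{h(q)}$, set $h(q+1)=h(q)-1$ and $q\gets q+1$. With infinite durations no departures occur, so $h(q)=q$. $\phi(\mathrm{REShare},\sigma_h)$ is the cost of the VMs used by REShare for the requests of interval $h$. *)

(* Defs.v *)
From Stdlib Require List.
From HB Require Import structures.
From mathcomp Require Import all_boot all_order all_algebra.
From mathcomp Require Import all_classical all_reals all_analysis.
Set Implicit Arguments. Unset Strict Implicit. Unset Printing Implicit Defensive.
Import Order.TTheory GRing.Theory Num.Theory.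
Local Open Scope ring_scope.

Record net (R : realType) := Net {
  nn     : nat;
  vnf    : finType;
  layer  : 'I_nn -> nat;
  theta  : vnf -> R;            (* complexity theta_v *)
  mubar  : R;                   (* maximum computing capability *)
  lmin   : R;
  dl     : nat -> R;            (* forwarding latency to layer l *)
  kf     : nat -> R;            (* fixed cost kappa_f^l *)
  kp     : nat -> R             (* proportional cost kappa_p^l *)
}.

Arguments nn {R} n.
Arguments vnf {R} n.
Arguments layer {R} n _.
Arguments theta {R} n _.
Arguments mubar {R} n.
Arguments lmin {R} n.
Arguments dl {R} n _.
Arguments kf {R} n _.
Arguments kp {R} n _.

(* A request (infinite duration): VNF set, load, delay target. *)
Record request (R : realType) (V : finType) := Req {
  rV : {set V};
  rload : R;
  rdelay : R
}.

Section Model.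
Variables (R : realType) (N : net R).
Local Notation V := (vnf N).
Local Notation node := ('I_(nn N)).

Definition kappa (l : nat) : R := kf N l + kp N l * mubar N.

Definition Mrv (r : request R V) (v : V) : R :=
  1 / (mubar N - theta N v * rload r).
Definition SM (r : request R V) : R := \sum_(v in rV r) Mrv r v.
Definition feasible_layer (r : request R V) (l : nat) : Prop :=
  dl N l + SM r <= rdelay r.
Definition lstar (r : request R V) : nat :=
  \max_(i : node | (dl N (layer N i) + SM r <= rdelay r)%R) layer N i.
Definition Dv (r : request R V) (v : V) : R :=
  Mrv r v / SM r * (rdelay r - dl N (lstar r)).

Definition lo (eps : R) (j : nat) : R :=
  1 / (mubar N - lmin N * (1 + eps) ^+ j).
Definition inL (eps D : R) (j : nat) : Prop :=
  if j == 0%N then lo eps j <= D <= lo eps j.+1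
  else lo eps j < D <= lo eps j.+1.

(* top-job delay D_j and the corresponding maximal value of theta_v * load
   on a VM of range j running at speed mubar: mubar - 1/D_j *)
Definition capj (eps : R) (j : nat) : R := lmin N * (1 + eps) ^+ j.+1.
Definition Dtop (eps : R) (j : nat) : R := 1 / (mubar N - capj eps j).

(* A VM: interval in which it was created, node, VNF, latency range,
   and its jobs as (load, fair delay allocation) pairs. *)
Record vm := VM {
  vint : nat; vnode : node; vv : V; vrange : nat; vjobs : seq (R * R)
}.

Definition vload (b : vm) : R := \sum_(p <- vjobs b) p.1.
Definition vminD (b : vm) : R :=
  let ds := map snd (vjobs b) in \big[Num.min/head 0 ds]_(x <- ds) x.
Definition vmu (b : vm) : R := theta N (vv b) * vload b + 1 / vminD b.
Definition vcost (b : vm) : R :=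
  kf N (layer N (vnode b)) + kp N (layer N (vnode b)) * vmu b.

Definition viable (b : vm) (lam D : R) : Prop :=
  let L := theta N (vv b) * (vload b + lam) in
  L < mubar N /\ 1 / (mubar N - L) <= D /\
  (forall p, List.In p (vjobs b) -> 1 / (mubar N - L) <= p.2).

Definition cand (q : nat) (i : node) (v : V) (j : nat) (b : vm) : bool :=
  [&& vint b == q, vnode b == i, vv b == v & vrange b == j].

Definition add_job (b : vm) (lam D : R) : vm :=
  VM (vint b) (vnode b) (vv b) (vrange b) (rcons (vjobs b) (lam, D)).

Definition place_job (q : nat) (i : node) (v : V) (j : nat) (lam D : R)
    (vms vms' : seq vm) : Prop :=
  (exists vms1 b vms2,
      vms = vms1 ++ b :: vms2 /\ cand q i v j b /\ viable b lam D /\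
      (forall b', List.In b' vms -> cand q i v j b' -> viable b' lam D ->
         vload b' <= vload b) /\
      vms' = vms1 ++ add_job b lam D :: vms2)
  \/
  ((forall b', List.In b' vms -> cand q i v j b' -> ~ viable b' lam D) /\
   vms' = rcons vms (VM q i v j [:: (lam, D)])).

(* a top job, as seen by SHA: VNF, load, range, and the data determining
   the layers at which deploying its request is feasible *)
Record topjob := TJ { tv : V; tload : R; trange : nat; tSM : R; tdelay : R }.

Fixpoint place_all (eps : R) (q : nat) (i : node) (r : request R V)
    (vs : seq V) (vms vms' : seq vm) (tj : seq topjob) : Prop :=
  match vs with
  | [::] => vms' = vms /\ tj = [::]
  | v :: vs' => exists j vmsm tj',
      inL eps (Dv r v) j /\
      place_job q i v j (rload r) (Dv r v) vms vmsm /\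
      place_all eps q i r vs' vmsm vms' tj' /\
      tj = TJ v (rload r) j (SM r) (rdelay r) :: tj'
  end.

(* Within a group (node, VNF, range) the total load is split fractionally
   in the canonical greedy way: as many full VMs (capability mubar) as
   possible, plus one partial VM for the remainder. *)
Definition sha_feasible (js : seq topjob) (a : seq node) : Prop :=
  size a = size js /\
  (forall p, List.In p (zip a js) ->
     dl N (layer N p.1) + tSM p.2 <= tdelay p.2).

Definition gkeys (js : seq topjob) (a : seq node) : seq (node * V * nat) :=
  undup [seq (p.1, tv p.2, trange p.2) | p <- zip a js].

Definition gload (js : seq topjob) (a : seq node) (g : node * V * nat) : R :=
  \sum_(p <- zip a js | (p.1, tv p.2, trange p.2) == g) tload p.2.

Definition nfull (eps : R) (js : seq topjob) (a : seq node)
    (g : node * V * nat) : int :=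
  Num.floor (theta N g.1.2 * gload js a g / capj eps g.2).

Definition grem (eps : R) (js : seq topjob) (a : seq node)
    (g : node * V * nat) : R :=
  theta N g.1.2 * gload js a g - (nfull eps js a g)%:~R * capj eps g.2.

Definition gfull (eps : R) js a (g : node * V * nat) : R :=
  (nfull eps js a g)%:~R * kappa (layer N g.1.1).

Definition gcost (eps : R) js a (g : node * V * nat) : R :=
  gfull eps js a g +
  (if 0 < grem eps js a g then
     kf N (layer N g.1.1) + kp N (layer N g.1.1) * (grem eps js a g + 1 / Dtop eps g.2)
   else 0).

Definition sha_cost (eps : R) js a : R := \sum_(g <- gkeys js a) gcost eps js a g.
Definition sha_full (eps : R) js a : R := \sum_(g <- gkeys js a) gfull eps js a g.

Definition sha_opt (eps : R) (js : seq topjob) (a : seq node) : Prop :=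
  sha_feasible js a /\
  forall a', sha_feasible js a' -> sha_cost eps js a <= sha_cost eps js a'.

Definition phitilde (eps : R) (js : seq topjob) (Y : R) : Prop :=
  exists a, sha_opt eps js a /\ Y = sha_full eps js a.

(* REShare (infinite durations: no departures, so h(q) = q)            *)
Definition eps_h (es : R) (h : nat) : R := es / 2 ^+ h.-1.

Definition Zc (es : R) : R :=
  (((2 * nn N + 2)%:R * (1 + es) + 1) * ln (mubar N / lmin N)
   * #|V|%:R * \sum_(i : node) kappa (layer N i)).

Definition Cq (es : R) (q : nat) : R :=
  Zc es / (eps_h es q * ln (1 + eps_h es q)).

Definition Sq (es : R) (Ys : seq R) (q : nat) : R :=
  1 / eps_h es q * \sum_(p < q.-1) (2 + 3 * eps_h es p.+1) * nth 0 Ys p.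

(* state: current interval q, closed-interval values Y~_1..Y~_{q-1},
   all VMs (tagged by interval), top jobs of the current interval *)
Record rstate := RS { rq : nat; rY : seq R; rvms : seq vm; rjobs : seq topjob }.

Definition rinit : rstate := RS 1 [::] [::] [::].

Definition step (es : R) (s : rstate) (r : request R V) (s' : rstate) : Prop :=
  let q := rq s in
  let e := eps_h es q in
  exists (i : node) vms' tj Y,
    layer N i = lstar r /\ feasible_layer r (layer N i) /\
    place_all e q i r (enum (rV r)) (rvms s) vms' tj /\
    phitilde e (rjobs s ++ tj) Y /\
    (if Num.max (Cq es q) (Sq es (rY s) q) <= Y
     then s' = RS q.+1 (rcons (rY s) Y) vms' [::]
     else s' = RS q (rY s) vms' (rjobs s ++ tj)).

Fixpoint execs (es : R) (s : rstate) (sigma : seq (request R V)) (s' : rstate)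
    : Prop :=
  match sigma with
  | [::] => s' = s
  | r :: sigma' => exists sm, step es s r sm /\ execs es sm sigma' s'
  end.

Definition phiR (s : rstate) (h : nat) : R :=
  \sum_(b <- rvms s | vint b == h) vcost b.

End Model.

(* Main.v *)
Require Import Defs.
From Stdlib Require List.
From HB Require Import structures.
From mathcomp Require Import all_boot all_order all_algebra.
From mathcomp Require Import all_classical all_reals all_analysis.
From mathcomp Require Import ring lra.
Set Implicit Arguments. Unset Strict Implicit. Unset Printing Implicit Defensive.
Import Order.TTheory GRing.Theory Num.Theory.
Local Open Scope ring_scope.

Section Gen.
Variable R : realType.

Lemma sum_In_le (T : Type) (s : seq T) (P : pred T) (F G : T -> R) :
  (forall x, List.In x s -> P x -> F x <= G x) ->
  \sum_(x <- s | P x) F x <= \sum_(x <- s | P x) G x.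
Proof.
elim: s => [|x s IH] H; first by rewrite !big_nil.
rewrite !big_cons; case: ifP => Px.
  apply: lerD; first exact: H (or_introl erefl) Px.
  by apply: IH => y Hy; exact: H (or_intror Hy).
by apply: IH => y Hy; exact: H (or_intror Hy).
Qed.

Lemma sum_In_eq (T : Type) (s : seq T) (P : pred T) (F G : T -> R) :
  (forall x, List.In x s -> P x -> F x = G x) ->
  \sum_(x <- s | P x) F x = \sum_(x <- s | P x) G x.
Proof.
elim: s => [|x s IH] H; first by rewrite !big_nil.
rewrite !big_cons; case: ifP => Px.
  rewrite (H x (or_introl erefl) Px); congr (_ + _).
  by apply: IH => y Hy; exact: H (or_intror Hy).
by apply: IH => y Hy; exact: H (or_intror Hy).
Qed.

Lemma sum_In0 (T : Type) (s : seq T) (P : pred T) (F : T -> R) :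
  (forall x, List.In x s -> ~~ P x) -> \sum_(x <- s | P x) F x = 0.
Proof.
elim: s => [|x s IH] H; first by rewrite big_nil.
rewrite big_cons (negbTE (H x (or_introl erefl))).
by apply: IH => y Hy; exact: H (or_intror Hy).
Qed.

Lemma count_In0 (T : Type) (s : seq T) (P : pred T) :
  (forall x, List.In x s -> ~~ P x) -> count P s = 0%N.
Proof.
elim: s => [|x s IH] H //=.
rewrite (negbTE (H x (or_introl erefl))) add0n.
by apply: IH => y Hy; exact: H (or_intror Hy).
Qed.

Lemma sum_ge0_In (T : Type) (s : seq T) (P : pred T) (F : T -> R) :
  (forall x, List.In x s -> P x -> 0 <= F x) -> 0 <= \sum_(x <- s | P x) F x.
Proof.
elim: s => [|x s IH] H; first by rewrite big_nil.
rewrite big_cons; case: ifP => Px.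
  apply: addr_ge0; first exact: H (or_introl erefl) Px.
  by apply: IH => y Hy; exact: H (or_intror Hy).
by apply: IH => y Hy; exact: H (or_intror Hy).
Qed.

Lemma In_map_mem (T : Type) (K : eqType) (s : seq T) (f : T -> K) x :
  List.In x s -> f x \in map f s.
Proof.
elim: s => [|y s IH] //= [<-|Hx]; first by rewrite inE eqxx.
by rewrite inE IH ?orbT.
Qed.

Lemma mem_map_In (T : Type) (K : eqType) (s : seq T) (f : T -> K) g :
  g \in map f s -> exists x, List.In x s /\ g = f x.
Proof.
elim: s => [|y s IH] //=; rewrite inE => /orP [/eqP->|/IH [x [Hx ->]]].
  by exists y; split=> //; left.
by exists x; split=> //; right.
Qed.

Lemma sum_if_const (T : Type) (s : seq T) (P C : pred T) (c : R) :
  \sum_(x <- s | P x) (if C x then c else 0) = c *+ count (fun x => P x && C x) s.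
Proof.
elim: s => [|x s IH]; first by rewrite big_nil.
rewrite big_cons /= IH; case: (P x); case: (C x) => //=;
  by rewrite ?mulrS ?add0r.
Qed.

Lemma sum_pred1_uniq (K : eqType) (U : seq K) (k : K) (c : R) :
  uniq U -> k \in U -> \sum_(g <- U) (if k == g then c else 0) = c.
Proof.
move=> Hu Hk; rewrite (sum_if_const U xpredT (fun g => k == g) c) /=.
have -> : count (fun g => k == g) U = count_mem k U.
  by apply: eq_count => g; rewrite eq_sym.
by rewrite count_uniq_mem // Hk.
Qed.

Lemma sum_keys (T : Type) (K : eqType) (s : seq T) (key : T -> K) (F : T -> R) :
  \sum_(g <- undup (map key s)) \sum_(p <- s | key p == g) F p = \sum_(p <- s) F p.
Proof.
under eq_bigr do rewrite big_mkcond.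
rewrite exchange_big /=.
apply: (sum_In_eq (P := xpredT)) => p Hp _.
have := sum_pred1_uniq (F p) (undup_uniq (map key s)).
by move=> ->; rewrite // mem_undup; apply: In_map_mem.
Qed.

Lemma natmul_le1 (c : R) n : 0 <= c -> (n <= 1)%N -> c *+ n <= c.
Proof. by move=> Hc; case: n => [|[|]] //= _; rewrite ?mulr0n. Qed.

Lemma sum_keys_bound (T : Type) (I W : finType) (s : seq T) (Q : pred T)
    (key : T -> I * W * nat) (kap : I -> R) (J : nat) :
  (forall i, 0 <= kap i) ->
  (forall x, List.In x s -> Q x -> ((key x).2 < J)%N) ->
  (forall i w j, (count (fun x => Q x && (key x == (i, w, j))) s <= 1)%N) ->
  \sum_(x <- s | Q x) kap (key x).1.1 <=
  \sum_(i : I) \sum_(w : W) \sum_(j < J) kap i.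
Proof.
move=> Hk HJ Hc.
have E : \sum_(x <- s | Q x) kap (key x).1.1 =
   \sum_(x <- s | Q x) \sum_(i : I) \sum_(w : W) \sum_(j < J)
       (if key x == (i, w, val j) then kap i else 0).
  apply: sum_In_eq => x Hx Qx.
  case Ek: (key x) => [[i0 w0] j0].
  have Hj0 : (j0 < J)%N by have := HJ x Hx Qx; rewrite Ek.
  rewrite (bigD1 i0) //= (bigD1 w0) //= (bigD1 (Ordinal Hj0)) //= eqxx.
  rewrite big1 ?addr0; last first.
    move=> j Hj; rewrite xpair_eqE /= eqxx /=; case: eqP => // Ej; exfalso; move/negP: Hj; apply; apply/eqP/val_inj => /=; by rewrite Ej.
  rewrite big1 ?addr0; last first.
    move=> w /negbTE Hw; apply: big1 => j _.
    by rewrite !xpair_eqE /= eqxx /= eq_sym Hw.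
  rewrite big1 ?addr0 //.
  move=> i /negbTE Hi; apply: big1 => w _; apply: big1 => j _.
  by rewrite !xpair_eqE /= eq_sym Hi.
rewrite E exchange_big /=; apply: ler_sum => i _.
rewrite exchange_big /=; apply: ler_sum => w _.
rewrite exchange_big /=; apply: ler_sum => j _.
by rewrite sum_if_const; apply: natmul_le1.
Qed.

Lemma arith_close (e G Y C Sm SW Tot : R) : 0 < e ->
  Tot <= Sm + 2 * (1 + e) * SW -> Sm <= G -> SW <= Y + G ->
  (3 + 2 * e) * G <= e * C -> C <= Y -> Tot <= (2 + 3 * e) * Y.
Proof.
move=> He H1 H2 H3 H4 H5.
have P1 : 2 * (1 + e) * SW <= 2 * (1 + e) * (Y + G).
  by apply: ler_wpM2l => //; rewrite mulr_ge0 // addr_ge0 // ltW.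
have P2 : e * C <= e * Y by apply: ler_wpM2l => //; rewrite ltW.
lra.
Qed.

End Gen.

Section Main.
Variables (R : realType) (N : net R) (es : R).
Local Notation V := (vnf N).
Local Notation node := ('I_(nn N)).
Local Notation mu := (mubar N).
Local Notation lm := (lmin N).
Local Notation th := (theta N).
Local Notation ep := (eps_h es).

Hypotheses (Hmu : 0 < mu) (Hlm : 0 < lm) (Hth : forall v, 0 < th v)
  (Hk0 : forall l, 0 <= kf N l /\ 0 <= kp N l)
  (Hkd : forall l l' : nat, (l < l')%N -> kf N l' < kf N l /\ kp N l' < kp N l)
  (Hes : 0 < es).

Lemma ep_gt0 q : 0 < ep q.
Proof. by rewrite /eps_h divr_gt0 // exprn_gt0. Qed.
Lemma ep_le q : ep q <= es.
Proof.
have h : 1 <= 2^+q.-1 :> R by apply: exprn_ege1; rewrite ler1n.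
rewrite /eps_h ler_pdivrMr ?exprn_gt0 // -subr_ge0 -{2}(mulr1 es) -mulrBr mulr_ge0 //; [exact: ltW | by rewrite subr_ge0].
Qed.

Lemma kappa_ge0 l : 0 <= kappa N l.
Proof. case: (Hk0 l) => h1 h2; rewrite /kappa addr_ge0 // mulr_ge0 //; exact: ltW. Qed.
Lemma kappa_mono l l' : (l <= l')%N -> kappa N l' <= kappa N l.
Proof.
rewrite leq_eqVlt => /orP [/eqP->//|/Hkd [h1 h2]].
by rewrite /kappa lerD ?ltW // ltr_pM2r.
Qed.

Definition Tj (e : R) (j : nat) := lm * (1 + e) ^+ j.
Lemma capjE e j : capj N e j = Tj e j * (1 + e).
Proof. by rewrite /capj /Tj exprSr mulrA. Qed.
Lemma Tj_gt0 e j : 0 < e -> 0 < Tj e j.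
Proof. by move=> He; rewrite /Tj mulr_gt0 // exprn_gt0 // ltr_wpDr // ltW. Qed.
Lemma capj_gt0 e j : 0 < e -> 0 < capj N e j.
Proof. by move=> He; rewrite capjE mulr_gt0 ?Tj_gt0 // ltr_wpDr // ltW. Qed.
Lemma Tj_le_capj e j : 0 < e -> Tj e j <= capj N e j.
Proof.
move=> He; rewrite capjE ler_peMr ?ltW ?Tj_gt0 //.
by rewrite ltrDl.
Qed.
Lemma loE e j : lo N e j = 1 / (mu - Tj e j).
Proof. by []. Qed.

Lemma viable_of (b : vm N) lam D e j :
  0 < e -> capj N e j < mu ->
  (forall p, List.In p (vjobs b) -> lo N e j <= p.2) -> lo N e j <= D ->
  th (vv b) * (vload b + lam) <= Tj e j -> viable b lam D.
Proof.
move=> He Hc Hp HD HL.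
have HT : Tj e j < mu by apply: le_lt_trans (Tj_le_capj _ He) Hc.
have Hm : 1 / (mu - th (vv b) * (vload b + lam)) <= lo N e j.
  rewrite loE !div1r lef_pV2 ?posrE ?subr_gt0 //; first by rewrite lerD2l lerN2.
  by apply: le_lt_trans HL HT.
split; first by apply: le_lt_trans HL HT.
split; first exact: le_trans Hm HD.
by move=> p Hin; apply: le_trans Hm (Hp p Hin).
Qed.

Lemma nonviable_gt (b : vm N) lam D e j :
  0 < e -> capj N e j < mu ->
  (forall p, List.In p (vjobs b) -> lo N e j <= p.2) -> lo N e j <= D ->
  ~ viable b lam D -> Tj e j < th (vv b) * (vload b + lam).
Proof.
move=> He Hc Hp HD Hn; rewrite ltNge; apply/negP => HL.
by apply: Hn; apply: (viable_of He Hc Hp HD HL).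
Qed.

Lemma inL_facts e D j : 0 < e -> 0 < D -> inL N e D j ->
  lo N e j <= D /\ capj N e j < mu.
Proof.
move=> He HD; rewrite /inL.
have key : D <= lo N e j.+1 -> capj N e j < mu.
  move=> H; rewrite ltNge; apply/negP => Hc.
  have : lo N e j.+1 <= 0.
    by rewrite /lo div1r invr_le0 subr_le0.
  by move=> H0; have := le_trans H H0; rewrite leNgt HD.
case: eqP => _ /andP [H1 H2]; split => //; try exact: key.
exact: ltW.
Qed.

Lemma bigmin_ge (ds : seq R) (m : R) :
  (forall x, x \in ds -> m <= x) -> ds != [::] ->
  m <= \big[Num.min/head 0 ds]_(x <- ds) x.
Proof.
move=> H Hne; rewrite big_seq.
apply: (big_ind (fun y => m <= y)).
- by case: ds H Hne => [|x s] //= H _; apply: H; rewrite inE eqxx.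
- by move=> x y Hx Hy; rewrite le_min Hx Hy.
- by move=> i Hi; apply: H.
Qed.

Definition wf (b : vm N) : Prop :=
  [/\ forall p, List.In p (vjobs b) -> 0 < p.1 /\ lo N (ep (vint b)) (vrange b) <= p.2,
      th (vv b) * vload b + 1 / vminD b <= mu &
      capj N (ep (vint b)) (vrange b) < mu].

Definition small (b : vm N) : bool :=
  th (vv b) * vload b <= Tj (ep (vint b)) (vrange b) / 2.
Definition kap (b : vm N) := kappa N (layer N (vnode b)).
Definition W (b : vm N) :=
  kap b * (th (vv b) * vload b) / capj N (ep (vint b)) (vrange b).

Lemma vload_ge0 b : wf b -> 0 <= vload b.
Proof.
case=> Hp _ _; rewrite /vload; apply: (sum_ge0_In (P := xpredT)) => p Hin _.
by case: (Hp p Hin) => /ltW.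
Qed.

Lemma W_ge0 b : wf b -> 0 <= W b.
Proof.
move=> Hb; rewrite /W mulr_ge0 // ?mulr_ge0 ?kappa_ge0 ?vload_ge0 ?ltW ?Hth //.
by rewrite invr_gt0 capj_gt0 // ep_gt0.
Qed.

Lemma vcost_le b : wf b -> vcost b <= kap b.
Proof.
case=> _ Hm _; rewrite /vcost /kap /kappa lerD2l.
by case: (Hk0 (layer N (vnode b))) => _ h; rewrite ler_wpM2l.
Qed.

Lemma vcost_split b : wf b ->
  vcost b <= (if small b then kap b else 0) + 2 * (1 + ep (vint b)) * W b.
Proof.
move=> Hb; have Hc := vcost_le Hb.
have HW := W_ge0 Hb.
case: ifP => Hs.
  apply: le_trans Hc _; rewrite lerDl mulr_ge0 // mulr_ge0 //.
  by rewrite addr_ge0 // ltW // ep_gt0.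
rewrite add0r; apply: le_trans Hc _.
move/negbT: Hs; rewrite /small -ltNge => Hs.
have He := ep_gt0 (vint b).
have HT := Tj_gt0 (vrange b) He.
have Hk := kappa_ge0 (layer N (vnode b)).
rewrite /W capjE /kap.
set k := kappa N _ in Hk *; set x := th (vv b) * vload b in Hs *.
set T := Tj _ _ in HT Hs *; set e := ep _ in He *.
have -> : 2 * (1 + e) * (k * x / (T * (1 + e))) = (2 * k * x) / T.
  by field; apply/andP; split; apply/lt0r_neq0 => //; rewrite ltr_wpDr // ltW.
rewrite ler_pdivlMr //.
have H2 : 0 <= 2 * x - T by lra.
have : 0 <= k * (2 * x - T) by rewrite mulr_ge0.
lra.
Qed.


Definition cnt_ok (vms : seq (vm N)) := forall q i v j,
  (count (fun b => cand q i v j b && small b) vms <= 1)%N.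
Definition vms_ok (q : nat) (vms : seq (vm N)) :=
  forall b, List.In b vms -> wf b /\ (vint b <= q)%N.

Lemma In_rcons (T : Type) (s : seq T) x y :
  List.In y (rcons s x) <-> List.In y s \/ y = x.
Proof. rewrite -cats1 List.in_app_iff /=; intuition. Qed.

Lemma candP q i v j (b : vm N) : cand q i v j b ->
  [/\ vint b = q, vnode b = i, vv b = v & vrange b = j].
Proof. by case/and4P => /eqP ? /eqP ? /eqP ? /eqP ?. Qed.

Lemma vload_add (b : vm N) lam D : vload (add_job b lam D) = vload b + lam.
Proof. by rewrite /vload /= big_rcons. Qed.

Lemma place_job_inv q i v j lam D vms vms' :
  place_job q i v j lam D vms vms' -> vms_ok q vms -> cnt_ok vms ->
  0 < lam -> lo N (ep q) j <= D -> th v * lam + 1 / D <= mu ->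
  capj N (ep q) j < mu ->
  [/\ vms_ok q vms', cnt_ok vms',
      (forall h (F : vm N -> R), h != q ->
         \sum_(b <- vms' | vint b == h) F b = \sum_(b <- vms | vint b == h) F b) &
      \sum_(b <- vms' | vint b == q) W b =
        \sum_(b <- vms | vint b == q) W b +
        kappa N (layer N i) * (th v * lam) / capj N (ep q) j].
Proof.
move=> [[vms1 [b [vms2 [Evms [Hc [Hv [Hmax Evms']]]]]]] | [Hnv Evms']]
  Hok Hcnt Hlam HD HlD Hcap.
- case/candP: (Hc) => Hq Hi Hvv Hj.
  have [Hb Hbq] : wf b /\ (vint b <= q)%N.
    by apply: Hok; rewrite Evms List.in_app_iff; right; left.
  have Hwf : wf (add_job b lam D).
    case: Hb => Hp Hm Hcp.
    case: Hv => HL [HLD HLp].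
    split => //=.
    + move=> p /In_rcons [/Hp //|->] /=; split => //.
      by rewrite Hq Hj.
    + rewrite vload_add.
      set L := th (vv b) * (vload b + lam) in HL HLD HLp *.
      have HmL : 0 < mu - L by rewrite subr_gt0.
      have Hmin : 1 / (mu - L) <= vminD (add_job b lam D).
        rewrite /vminD /=; apply: bigmin_ge; last by rewrite map_rcons; case: (map _ _).
        move=> x /mem_map_In [p [/In_rcons [Hin|->] ->]] //.
        exact: HLp.
      have H1 : 1 / vminD (add_job b lam D) <= mu - L.
        have Hpos : 0 < 1 / (mu - L) by rewrite div1r invr_gt0.
        have Em : mu - L = 1 / (1 / (mu - L)) by rewrite !div1r invrK.
        rewrite [X in _ <= X]Em !div1r lef_pV2 ?posrE.
        - by move: Hmin; rewrite div1r.
        - by apply: lt_le_trans Hpos Hmin.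
        - by rewrite -div1r.
      by rewrite /L mulrDr in H1 *; lra.
  split.
  + move=> b'; rewrite Evms' List.in_app_iff /= => [[H|[<-|H]]].
    * by apply: Hok; rewrite Evms List.in_app_iff; left.
    * by split => //.
    * by apply: Hok; rewrite Evms List.in_app_iff; right; right.
  + move=> q' i' v' j'; apply: leq_trans (Hcnt q' i' v' j').
    rewrite Evms' Evms !count_cat /= leq_add2l leq_add2r.
    have -> : cand q' i' v' j' (add_job b lam D) = cand q' i' v' j' b by [].
    case: (cand _ _ _ _ b) => //=.
    case Hs: (small (add_job b lam D)) => //.
    suff -> : small b by [].
    move: Hs; rewrite /small /= vload_add => Hs.
    have := Hth (vv b); rewrite mulrDr in Hs; nra.
  + move=> h F Hh; rewrite Evms' Evms !big_cat !big_cons /= Hq.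
    by rewrite eq_sym (negbTE Hh).
  + rewrite Evms' Evms !big_cat !big_cons /= Hq eqxx.
    rewrite /W /kap /= vload_add Hq Hi Hvv Hj; ring.
- set b0 := VM q i v j [:: (lam, D)].
  have Hl0 : vload b0 = lam by rewrite /vload big_cons big_nil addr0.
  have Hwf : wf b0.
    split => /=.
    + by move=> p [<-|[]]; split.
    + by rewrite Hl0 /vminD /= big_cons big_nil minxx.
    + by [].
  split.
  + move=> b'; rewrite Evms' => /In_rcons [/Hok //|->]; split => //.
  + move=> q' i' v' j'; rewrite Evms' -cats1 count_cat /= addn0.
    case Hc0: (cand q' i' v' j' b0 && small b0); last by rewrite addn0.
    case/andP: Hc0 => /candP [/= <- <- <- <-] Hs0.
    rewrite count_In0 //.
    move=> b' Hb'; apply/negP => /andP [Hc' Hs'].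
    case/candP: (Hc') => Hq Hi Hvv Hj.
    have [[Hp _ _] _] := Hok b' Hb'.
    rewrite Hq Hj in Hp.
    have Hgt := nonviable_gt (ep_gt0 q) Hcap
      (fun p Hin => (let: conj _ h := Hp p Hin in h)) HD (Hnv b' Hb' Hc').
    move: Hs' Hs0 Hgt; rewrite /small /= Hl0 Hq Hvv Hj mulrDr => Hs' Hs0 Hgt.
    clear -Hs' Hs0 Hgt; lra.
  + move=> h F Hh; rewrite Evms' !big_rcons /=.
    by rewrite eq_sym (negbTE Hh) addr0.
  + by rewrite Evms' big_rcons /= eqxx /W /kap /= Hl0.
Qed.


Definition lst (t : topjob N) : nat :=
  \max_(i : node | dl N (layer N i) + tSM t <= tdelay t) layer N i.
Definition w (q : nat) (t : topjob N) :=
  kappa N (lst t) * (th (tv t) * tload t) / capj N (ep q) (trange t).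

Lemma Dv_facts r v i : layer N i = lstar r -> feasible_layer r (layer N i) ->
  (forall u, u \in rV r -> th u * rload r < mu) -> v \in rV r ->
  0 < Dv r v /\ th v * rload r + 1 / Dv r v <= mu.
Proof.
move=> Hl Hf Hu Hv.
have HM u : u \in rV r -> 0 < Mrv r u.
  by move=> Hu'; rewrite /Mrv div1r invr_gt0 subr_gt0 Hu.
have HSM : Mrv r v <= SM r.
  rewrite /SM (bigD1 v) //= lerDl sumr_ge0 // => u /andP [Hu' _].
  exact: ltW (HM u Hu').
have HSM0 : 0 < SM r := lt_le_trans (HM v Hv) HSM.
have Hd : SM r <= rdelay r - dl N (lstar r).
  by move: Hf; rewrite /feasible_layer Hl => Hf; rewrite lerBrDl.
have Hy : 1 <= (rdelay r - dl N (lstar r)) / SM r by rewrite ler_pdivlMr // mul1r.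
have HDv : Mrv r v <= Dv r v.
  rewrite /Dv mulrAC -mulrA.
  have := HM v Hv; set M := Mrv r v; set y := _ / _ in Hy *; nra.
have HD0 : 0 < Dv r v := lt_le_trans (HM v Hv) HDv.
split => //.
have : 1 / Dv r v <= mu - th v * rload r.
  have -> : mu - th v * rload r = 1 / Mrv r v by rewrite /Mrv !div1r invrK.
  by rewrite !div1r lef_pV2 ?posrE // HM.
lra.
Qed.

Lemma place_all_inv q i r vs vms vms' tj :
  layer N i = lstar r -> feasible_layer r (layer N i) -> lm <= rload r ->
  (forall u, u \in rV r -> th u * rload r < mu) ->
  all (fun v => v \in rV r) vs ->
  place_all (ep q) q i r vs vms vms' tj -> vms_ok q vms -> cnt_ok vms ->
  [/\ vms_ok q vms', cnt_ok vms',
      (forall h (F : vm N -> R), h != q ->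
         \sum_(b <- vms' | vint b == h) F b = \sum_(b <- vms | vint b == h) F b),
      \sum_(b <- vms' | vint b == q) W b =
        \sum_(b <- vms | vint b == q) W b + \sum_(t <- tj) w q t &
      forall t, List.In t tj -> 0 < tload t /\ capj N (ep q) (trange t) < mu].
Proof.
move=> Hl Hf Hlr Hu; elim: vs vms tj => [|v vs IH] vms tj /=.
  by move=> _ [-> ->] Hok Hc; split => //; rewrite big_nil addr0.
case/andP=> Hv Hvs [j [vmsm [tj' [HL [Hpj [Hpa ->]]]]]] Hok Hc.
have [HD0 HDm] := Dv_facts Hl Hf Hu Hv.
have [Hlo Hcap] := inL_facts (ep_gt0 q) HD0 HL.
have Hlam : 0 < rload r by apply: lt_le_trans Hlm Hlr.
have [Hok1 Hc1 Hs1 HW1] := place_job_inv Hpj Hok Hc Hlam Hlo HDm Hcap.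
have [Hok2 Hc2 Hs2 HW2 Ht2] := IH vmsm tj' Hvs Hpa Hok1 Hc1.
split => //.
- by move=> h F Hh; rewrite Hs2 // Hs1.
- rewrite HW2 HW1 big_cons -addrA; congr (_ + (_ + _)).
  rewrite /w /=; have -> : lst (TJ v (rload r) j (SM r) (rdelay r)) = lstar r by [].
  by rewrite -Hl.
- by move=> t [<-|Ht]; [split | exact: Ht2].
Qed.

Definition Jn (e : R) : nat := Num.truncn (ln (R:=R) (mu / lm) / ln (R:=R) (1 + e)).

Lemma ln1e_gt0 (e : R) : 0 < e -> 0 < ln (1 + e).
Proof. by move=> He; apply: ln_gt0; rewrite ltrDl. Qed.

Lemma range_lt (e : R) j : 0 < e -> capj N e j < mu -> (j < Jn e)%N.
Proof.
move=> He Hc; rewrite /Jn truncn_gt_nat ler_pdivlMr ?ln1e_gt0 //.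
rewrite mulr_natl -lnXn ?ltr_wpDr ?ltW //.
have Hpow : 0 < (1+e)^+j.+1 by rewrite exprn_gt0 // ltr_wpDr // ltW.
have Hml : 0 < mu / lm.
  by rewrite divr_gt0 //; apply: le_lt_trans (ltW (capj_gt0 j He)) Hc.
rewrite ltr_ln ?posrE //.
by rewrite ltr_pdivlMr // mulrC.
Qed.

Lemma Jn_bound (e : R) : 0 < e -> lm < mu -> (Jn e)%:R * ln (1 + e) <= ln (mu / lm).
Proof.
move=> He Hl.
have H0 : 0 <= ln (mu / lm) / ln (1 + e).
  by rewrite divr_ge0 ?ltW ?ln1e_gt0 // ln_gt0 // ltr_pdivlMr // mul1r.
have := truncn_le (ln (mu / lm) / ln (1 + e)); rewrite H0.
by rewrite ler_pdivlMr ?ln1e_gt0.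
Qed.


Definition Gs (J : nat) :=
  \sum_(i : node) \sum_(v : V) \sum_(j < J) kappa N (layer N i).

Lemma In_zip (S T : Type) (a : seq S) (s : seq T) p :
  List.In p (zip a s) -> List.In p.2 s.
Proof.
elim: a s => [|x a IH] [|y s] //= [<-|H]; [by left | right; exact: IH H].
Qed.

Lemma In_mem (T : eqType) (s : seq T) x : List.In x s -> x \in s.
Proof.
elim: s => [|y s IH] //= [->|H]; rewrite inE; first by rewrite eqxx.
by rewrite IH ?orbT.
Qed.

Definition gkey (p : node * topjob N) := (p.1, tv p.2, trange p.2).

Lemma sha_bound (e : R) js a J : 0 < e -> sha_feasible js a ->
  (forall t, List.In t js -> 0 <= tload t /\ (trange t < J)%N) ->
  \sum_(t <- js) kappa N (lst t) * (th (tv t) * tload t) / capj N e (trange t)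
    <= sha_full e js a + Gs J /\ 0 <= sha_full e js a.
Proof.
move=> He [Hsz Hf] Ht.
have Egk : gkeys js a = undup (map gkey (zip a js)) by [].
have Hgl g : 0 <= gload js a g.
  rewrite /gload; apply: sum_ge0_In => p Hp _; exact: (Ht _ (In_zip Hp)).1.
have Hc0 g : 0 < capj N e g by apply: capj_gt0.
have Hfull0 : 0 <= sha_full e js a.
  rewrite /sha_full sumr_ge0 // => g _; rewrite /gfull mulr_ge0 ?kappa_ge0 //.
  rewrite ler0z /nfull floor_ge0; exact: divr_ge0 (mulr_ge0 (ltW (Hth _)) (Hgl _)) (ltW (Hc0 _)).
split => //.
rewrite -[in X in X <= _](unzip2_zip (s := a) (t := js)) ?Hsz // big_map.
apply: (@le_trans _ _ (\sum_(p <- zip a js) kappa N (layer N p.1) *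
   (th (tv p.2) * tload p.2) / capj N e (trange p.2))).
  apply: (sum_In_le (P := xpredT)) => p Hp _.
  have [Ht0 _] := Ht _ (In_zip Hp).
  apply: ler_wpM2r; first by rewrite invr_ge0 ltW.
  apply: ler_wpM2r; first by rewrite mulr_ge0 // ltW.
  apply: kappa_mono; apply: (leq_bigmax_cond (F := fun i => layer N i)).
  exact: Hf.
rewrite -(sum_keys _ gkey) -Egk.
apply: (@le_trans _ _ (\sum_(g <- gkeys js a) (gfull e js a g + kappa N (layer N g.1.1)))).
  apply: ler_sum => g _.
  have -> : \sum_(p <- zip a js | gkey p == g) kappa N (layer N p.1) *
       (th (tv p.2) * tload p.2) / capj N e (trange p.2)
     = kappa N (layer N g.1.1) * (th g.1.2 * gload js a g / capj N e g.2).
    rewrite /gload mulr_sumr mulr_suml mulr_sumr.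
    by apply: eq_bigr => p /eqP <- /=; rewrite -mulrA.
  rewrite /gfull /nfull.
  set x := th g.1.2 * gload js a g / capj N e g.2.
  have := floorD1_gt x; rewrite intrD1 => Hx.
  have Hk := kappa_ge0 (layer N g.1.1).
  set n := (Num.floor x)%:~R in Hx *.
  have : 0 <= kappa N (layer N g.1.1) * (n + 1 - x).
    by rewrite mulr_ge0 // subr_ge0 ltW.
  set k := kappa N _ in Hk *.
  clear; lra.
rewrite big_split /= lerD2l.
apply: (sum_keys_bound (Q := xpredT) (key := id)
  (kap := fun i => kappa N (layer N i))) => //.
- by move=> i; apply: kappa_ge0.
- move=> x Hx _; have := In_mem Hx; rewrite Egk mem_undup => /mem_map_In [p [Hp ->]].
  exact: (Ht _ (In_zip Hp)).2.
- move=> i v j /=.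
  have -> : count (fun x => x == (i, v, j)) (gkeys js a) = count_mem (i, v, j) (gkeys js a).
    by apply: eq_count => x; rewrite eq_sym.
  by rewrite count_uniq_mem ?Egk ?undup_uniq //; case: (_ \in _).
Qed.


Lemma Gs_eq J :
  Gs J = (#|V|%:R * J%:R) * \sum_(i : node) kappa N (layer N i).
Proof.
rewrite /Gs mulr_sumr; apply: eq_bigr => i _.
rewrite (eq_bigr (fun _ => kappa N (layer N i) *+ J)); last first.
  by move=> v _; rewrite sumr_const card_ord.
rewrite sumr_const -mulrnA -[LHS]mulr_natl natrM; congr (_ * _); exact: mulrC.
Qed.

Lemma Gs_ge0 J : 0 <= Gs J.
Proof. by rewrite /Gs; do 3!(apply: sumr_ge0 => ? _); apply: kappa_ge0. Qed.

Lemma Z_bound (e : R) : 0 < e -> e <= es -> lm < mu ->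
  (3 + 2 * e) * Gs (Jn e) <= Zc N es / ln (1 + e).
Proof.
move=> He Hee Hl.
have HL := ln1e_gt0 He.
have HJ := Jn_bound He Hl.
rewrite Gs_eq /Zc.
set S := \sum_(i : node) _.
have S0 : 0 <= S by apply: sumr_ge0 => i _; apply: kappa_ge0.
set Vr := #|V|%:R.
have V0 : 0 <= Vr by [].
set Jr := (Jn e)%:R in HJ *.
have J0 : 0 <= Jr by [].
set L := ln (1 + e) in HL HJ *.
set lnr := ln (mu / lm) in HJ *.
set A := (2 * nn N + 2)%:R * (1 + es) + 1.
have HA : 3 + 2 * e <= A.
  rewrite /A natrD natrM.
  have n0 : 0 <= (nn N)%:R :> R by [].
  set n := (nn N)%:R in n0 *.
  have : 0 <= n * (1 + es) by rewrite mulr_ge0 // addr_ge0 // ltW.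
  lra.
rewrite ler_pdivlMr //.
have P1 : (3 + 2 * e) * (Jr * L) <= A * lnr.
  apply: ler_pM => //; first by rewrite addr_ge0 // mulr_ge0 // ltW.
  by rewrite mulr_ge0 // ltW.
have P2 : (3 + 2 * e) * (Jr * L) * (Vr * S) <= A * lnr * (Vr * S).
  by apply: ler_wpM2r => //; rewrite mulr_ge0.
have -> : (3 + 2 * e) * (Vr * Jr * S) * L = (3 + 2 * e) * (Jr * L) * (Vr * S) by ring.
by have -> : A * lnr * Vr * S = A * lnr * (Vr * S) by ring.
Qed.

Lemma close_bound q vms js Y :
  vms_ok q vms -> cnt_ok vms ->
  \sum_(b <- vms | vint b == q) W b = \sum_(t <- js) w q t ->
  (forall t, List.In t js -> 0 < tload t /\ capj N (ep q) (trange t) < mu) ->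
  phitilde (ep q) js Y -> Cq N es q <= Y ->
  \sum_(b <- vms | vint b == q) vcost b <= (2 + 3 * ep q) * Y /\ 0 <= Y.
Proof.
move=> Hok Hcnt HW Hjs [a [[Hfeas _] ->]] HC.
have He := ep_gt0 q.
have Hjs' : forall t, List.In t js -> 0 <= tload t /\ (trange t < Jn (ep q))%N.
  move=> t Ht; have [h1 h2] := Hjs t Ht; split; [exact: ltW | exact: range_lt He h2].
have [Hsha HY0] := sha_bound He Hfeas Hjs'.
split => //.
have HY3 : 0 <= (2 + 3 * ep q) * sha_full (ep q) js a.
  by rewrite mulr_ge0 // addr_ge0 // mulr_ge0 // ltW.
case: (lerP mu lm) => Hlmu.
  rewrite sum_In0 // => b Hb; apply/negP => /eqP Hq.
  have [[_ _ Hc] _] := Hok b Hb.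
  have := le_lt_trans (Tj_le_capj (vrange b) (ep_gt0 (vint b))) Hc.
  rewrite /Tj Hq => H1.
  have h : 1 <= (1 + ep q) ^+ vrange b by apply: exprn_ege1; rewrite lerDl ltW.
  have H2 : lm <= lm * (1 + ep q) ^+ vrange b.
    by rewrite ler_peMr // ltW.
  by have := lt_le_trans (le_lt_trans H2 H1) Hlmu; rewrite ltxx.
have HeC : Zc N es / ln (1 + ep q) = ep q * Cq N es q.
  rewrite /Cq; field; apply/andP; split; apply: lt0r_neq0 => //.
  exact: ln1e_gt0.
have HZ := Z_bound He (ep_le q) Hlmu; rewrite HeC in HZ.
have Hsplit : \sum_(b <- vms | vint b == q) vcost b <=
   \sum_(b <- vms | (vint b == q) && small b) kap b +
   2 * (1 + ep q) * \sum_(b <- vms | vint b == q) W b.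
  rewrite mulr_sumr big_mkcondr -big_split /=.
  apply: sum_In_le => b Hb /eqP Hq.
  have [Hwf _] := Hok b Hb.
  by have := vcost_split Hwf; rewrite Hq.
have Hsmall : \sum_(b <- vms | (vint b == q) && small b) kap b <= Gs (Jn (ep q)).
  apply: (sum_keys_bound (Q := fun b => (vint b == q) && small b)
    (key := fun b => (vnode b, vv b, vrange b))
    (kap := fun i => kappa N (layer N i))).
  - by move=> i; apply: kappa_ge0.
  - move=> b Hb /andP [/eqP Hq _]; have [[_ _ Hc] _] := Hok b Hb.
    by rewrite Hq in Hc; exact: range_lt He Hc.
  - move=> i v j; apply: leq_trans (Hcnt q i v j).
    rewrite leq_eqVlt; apply/orP; left; apply/eqP; apply: eq_count => b /=.
    rewrite /cand !xpair_eqE.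
    by case: (vint b == q); case: (small b); case: (vnode b == i);
       case: (vv b == v); case: (vrange b == j).
have HSW : \sum_(b <- vms | vint b == q) W b <= sha_full (ep q) js a + Gs (Jn (ep q)).
  by rewrite HW.
exact: arith_close He Hsplit Hsmall HSW HZ HC.
Qed.


Definition Inv (s : rstate N) : Prop :=
  [/\ (1 <= rq s)%N /\ size (rY s) = (rq s).-1,
      vms_ok (rq s) (rvms s),
      cnt_ok (rvms s),
      \sum_(b <- rvms s | vint b == rq s) W b = \sum_(t <- rjobs s) w (rq s) t /\
      (forall t, List.In t (rjobs s) ->
         0 < tload t /\ capj N (ep (rq s)) (trange t) < mu) &
      (forall p, (p < size (rY s))%N ->
         [/\ phiR s p.+1 <= (2 + 3 * ep p.+1) * nth 0 (rY s) p,
             0 <= nth 0 (rY s) p &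
             \sum_(p' < p) (2 + 3 * ep p'.+1) * nth 0 (rY s) p'
               <= ep p.+1 * nth 0 (rY s) p])].

Lemma Inv_init : Inv (rinit N).
Proof.
split => //=; by rewrite ?big_nil.
Qed.

Lemma vms_ok_S q vms : vms_ok q vms -> vms_ok q.+1 vms.
Proof. by move=> H b Hb; have [h1 h2] := H b Hb; split => //; apply: leqW. Qed.

Lemma step_inv s r s' : Inv s -> step es s r s' -> lm <= rload r ->
  (forall v, v \in rV r -> th v * rload r < mu) -> Inv s'.
Proof.
case=> [[Hq1 Hsz] Hok Hcnt [HW Hjobs] Hcl].
case=> i [vms' [tj [Y [Hl [Hf [Hpa [Hphi Hif]]]]]]] Hlr Hu.
have Hall : all (fun v => v \in rV r) (enum (rV r)).
  by apply/allP => v; rewrite mem_enum.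
have [Hok' Hcnt' Hs' HW' Htj] := place_all_inv Hl Hf Hlr Hu Hall Hpa Hok Hcnt.
have Hjs : forall t, List.In t (rjobs s ++ tj) ->
    0 < tload t /\ capj N (ep (rq s)) (trange t) < mu.
  by move=> t /List.in_app_iff [/Hjobs|/Htj].
have HWjs : \sum_(b <- vms' | vint b == rq s) W b =
            \sum_(t <- rjobs s ++ tj) w (rq s) t by rewrite HW' HW big_cat.
have Hph p : (p < size (rY s))%N ->
    \sum_(b <- vms' | vint b == p.+1) vcost b = phiR s p.+1.
  move=> Hp; rewrite Hs' // neq_ltn; apply/orP; left.
  by rewrite Hsz in Hp; rewrite -(prednK Hq1) ltnS.
move: Hif; case: ifP => Hmax ->.
- move: Hmax; rewrite ge_max => /andP [HC HS].
  have [Hphi_q HY0] := close_bound Hok' Hcnt' HWjs Hjs Hphi HC.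
  split => //=.
  + by rewrite size_rcons Hsz prednK.
  + exact: vms_ok_S.
  + rewrite big_nil sum_In0 // => b Hb.
    by have [_ h] := Hok' b Hb; rewrite eqn_leq negb_and ltnNge h orbT.
  + move=> p; rewrite size_rcons ltnS leq_eqVlt => /orP [/eqP Ep|Hp].
    * have Eq : p.+1 = rq s by rewrite Ep Hsz prednK.
      rewrite nth_rcons Ep ltnn eqxx /phiR /= -Ep Eq.
      split => //.
      rewrite (eq_bigr (fun p' : 'I_p => (2 + 3 * ep p'.+1) * nth 0 (rY s) p')); last first.
        by move=> p' _; rewrite nth_rcons -Ep ltn_ord.
      move: HS; rewrite /Sq -Hsz -Ep.
      have He := ep_gt0 (rq s).
      set S := \sum_(p' < _) _ => HS.
      have := ler_wpM2l (ltW He) HS.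
      by rewrite mulrA div1r mulrV ?unitfE ?lt0r_neq0 // mul1r.
    * have [h1 h2 h3] := Hcl p Hp.
      rewrite nth_rcons Hp /phiR /= Hph //.
      split => //.
      rewrite (eq_bigr (fun p' : 'I_p => (2 + 3 * ep p'.+1) * nth 0 (rY s) p')) //.
      by move=> p' _; rewrite nth_rcons (ltn_trans (ltn_ord p') Hp).
- split => //=.
  move=> p Hp; have [h1 h2 h3] := Hcl p Hp.
  by split => //; rewrite /phiR /= Hph.
Qed.

Lemma execs_inv s sigma sf : Inv s ->
  (forall r, List.In r sigma ->
     lm <= rload r /\ forall v, v \in rV r -> th v * rload r < mu) ->
  execs es s sigma sf -> Inv sf.
Proof.
elim: sigma s => [|r sigma IH] s Hs Hr /=; first by move=> ->.
case=> sm [Hst Hex]; apply: (IH sm) => //.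
- by have [h1 h2] := Hr r (or_introl erefl); apply: step_inv Hst h1 h2.
- by move=> r' Hr'; apply: Hr; right.
Qed.

Lemma final sigma sf :
  (forall r, List.In r sigma ->
     lm <= rload r /\ forall v, v \in rV r -> th v * rload r < mu) ->
  execs es (rinit N) sigma sf ->
  forall k : nat, (1 <= k <= size (rY sf))%N ->
  \sum_(h < k) phiR sf h.+1
    <= (2 + 4 * eps_h es k) * \sum_(h < k) nth 0 (rY sf) h.
Proof.
move=> Hr Hex k /andP [Hk1 Hk2].
have [_ _ _ _ Hcl] := execs_inv Inv_init Hr Hex.
case: k Hk1 Hk2 => // p _ Hp.
apply: (@le_trans _ _ (\sum_(h < p.+1) (2 + 3 * ep h.+1) * nth 0 (rY sf) h)).
  apply: ler_sum => h _; have [h1 _ _] := Hcl h (leq_trans (ltn_ord h) Hp).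
  exact: h1.
have [_ Hy0 HS] := Hcl p Hp.
have Hall : forall h : 'I_p.+1, 0 <= nth 0 (rY sf) h.
  by move=> h; have [_ h2 _] := Hcl h (leq_trans (ltn_ord h) Hp).
rewrite !big_ord_recr /=.
have H0 : 0 <= \sum_(i < p) nth 0 (rY sf) i.
  by apply: sumr_ge0 => h _; have := Hall (widen_ord (leqnSn p) h).
have He := ep_gt0 p.+1.
set A := \sum_(i < p) _ in HS *; set B := \sum_(i < p) _ in H0 *.
set y := nth 0 (rY sf) p in Hy0 HS *.
have : 0 <= (2 + 4 * ep p.+1) * B by rewrite mulr_ge0 // addr_ge0 // mulr_ge0 // ltW.
move: HS; clear; move=> HS H; lra.
Qed.

End Main.

Unset Implicit Arguments.

Theorem lemma5 (R : realType) (N : net R) (es : R)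
    (sigma : seq (request R (vnf N))) (sf : rstate N) :
  0 < mubar N -> 0 < lmin N ->
  (forall v, 0 < theta N v <= 1) ->
  (forall l l' : nat, (l < l')%N -> dl N l < dl N l') -> 0 <= dl N 0 ->
  (forall l l' : nat, (l < l')%N -> kf N l' < kf N l /\ kp N l' < kp N l) ->
  (forall l : nat, 0 <= kf N l /\ 0 <= kp N l) ->
  0 < es ->
  (forall r, List.In r sigma ->
     lmin N <= rload r /\ forall v, v \in rV r -> theta N v * rload r < mubar N) ->
  execs es (rinit N) sigma sf ->
  forall k : nat, (1 <= k <= size (rY sf))%N ->
  \sum_(h < k) phiR sf h.+1
    <= (2 + 4 * eps_h es k) * \sum_(h < k) nth 0 (rY sf) h.
Proof.
move=> Hmu Hlm Hth _ _ Hkd Hk0 Hes Hr Hex.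
apply: final => //; [ by move=> v; have /andP [] := Hth v | exact: Hr | exact: Hex].
Qed.
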